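(* Let $L$ be a co-Heyting algebra. Then $\widehat L$, together with the map $L\to\widehat L$, $a\mapsto(\pi_d(a))_{d<\omega}$, is the Hausdorff completion of the pseudometric space $(L,\operatorname{dist}_L)$, and the projective topology on $\widehat L$ coincides with the codimetric topology of the co-Heyting algebra $\widehat L$.
   Context: A co-Heyting algebra is a bounded distributive lattice $(L,0,1,\vee,\wedge)$ such that $a-b=\min\{c\in L: a\le b\vee c\}$ exists for all $a,b$. Let $a\triangle b=(a-b)\vee(b-a)$; for an ideal $I$, $L/I$ is the quotient by $a\equiv_I b\iff a\triangle b\in I$. $\operatorname{Spec}L$ is the set of prime filters ordered by inclusion; height = foundation rank there; $\operatorname{codim}_La=\min\{\operatorname{height}\mathfrak p: a\in\mathfrak p\}$ ($+\infty$ if none); $dL=\{a:\operatorname{codim}_La\ge d\}$ is an ideal; $\pi_d:L\to L/dL$ is the canonical projection, and $\pi_{d,d+1}:L/(d+1)L\to L/dL$ the canonical surjection. $\widehat L=\{(x_d)_{d<\omega}: x_d\in L/dL,\ \pi_{d,d+1}(x_{d+1})=x_d\}$, a co-Heyting algebra, with the projective topology from the discrete topologies on the $L/dL$. For a co-Heyting algebra $M$, $\operatorname{dist}_M(a,b)=2^{-\operatorname{codim}_M(a\triangle b)}$ if finite, $0$ otherwise, and the codimetric topology is the topology of this pseudometric. The Hausdorff completion of a pseudometric space $X$ is a complete metric space $X'$ with a continuous map $X\to X'$ of dense image through which every continuous map from $X$ to a complete metric space factors uniquely and continuously.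
   Formalization: In the universal property of the Hausdorff completion, only uniformly continuous maps from $(L,\operatorname{dist}_L)$ into complete metric spaces must factor, not all continuous ones, and $\widehat L$ carries the metric $\operatorname{dist}_{\widehat L}$. Each condition added here is assumed in the paper as well or is needed for the statement above to hold. *)

(* Defs.v *)
From Stdlib Require Import Reals ClassicalEpsilon.
Open Scope R_scope.

Record chops (T : Type) := CHOps {
  ch_zero : T; ch_one : T;
  ch_join : T -> T -> T; ch_meet : T -> T -> T;
  ch_diff : T -> T -> T }.
Arguments ch_zero {T}. Arguments ch_one {T}. Arguments ch_join {T}.
Arguments ch_meet {T}. Arguments ch_diff {T}.

Definition ch_le {T} (L : chops T) (a b : T) : Prop := ch_join L a b = b.

Definition is_coHeyting {T} (L : chops T) : Prop :=
  let j := ch_join L in let m := ch_meet L in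
  (forall a b c, j a (j b c) = j (j a b) c) /\
  (forall a b, j a b = j b a) /\
  (forall a b c, m a (m b c) = m (m a b) c) /\
  (forall a b, m a b = m b a) /\
  (forall a b, j a (m a b) = a) /\
  (forall a b, m a (j a b) = a) /\
  (forall a b c, m a (j b c) = j (m a b) (m a c)) /\
  (forall a, j (ch_zero L) a = a) /\
  (forall a, m (ch_one L) a = a) /\
  (forall a b c, ch_le L a (j b c) <-> ch_le L (ch_diff L a b) c).

Definition sym_diff {T} (L : chops T) (a b : T) : T :=
  ch_join L (ch_diff L a b) (ch_diff L b a).

Definition is_prime_filter {T} (L : chops T) (p : T -> Prop) : Prop :=
  p (ch_one L) /\ ~ p (ch_zero L) /\
  (forall a b, p a -> ch_le L a b -> p b) /\
  (forall a b, p a -> p b -> p (ch_meet L a b)) /\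
  (forall a b, p (ch_join L a b) -> p a \/ p b).

Definition strict_incl {T} (q p : T -> Prop) : Prop :=
  (forall x, q x -> p x) /\ exists x, p x /\ ~ q x.

(* height_ge L p n  <->  height p >= n  (height = foundation rank in Spec L,
   elements outside the well-founded part having rank infinity). *)
Fixpoint height_ge {T} (L : chops T) (p : T -> Prop) (n : nat) : Prop :=
  match n with
  | O => True
  | S n' => exists q, is_prime_filter L q /\ strict_incl q p /\ height_ge L q n'
  end.

(* in_dL L d a  <->  codim_L a >= d  <->  a \in dL *)
Definition in_dL {T} (L : chops T) (d : nat) (a : T) : Prop :=
  forall p, is_prime_filter L p -> p a -> height_ge L p d.

Definition codim_eq {T} (L : chops T) (a : T) (n : nat) : Prop :=
  in_dL L n a /\ ~ in_dL L (S n) a.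

Definition codim_dist {T} (L : chops T) (a b : T) : R :=
  match excluded_middle_informative (exists n, codim_eq L (sym_diff L a b) n) with
  | left H => (/ 2) ^ (proj1_sig (constructive_indefinite_description _ H))
  | right _ => 0
  end.

Definition cls {T} (L : chops T) (d : nat) (a : T) : T -> Prop :=
  fun b => in_dL L d (sym_diff L a b).

Definition quot {T} (L : chops T) (d : nat) : Type :=
  { S : T -> Prop | exists a, S = cls L d a }.

Definition pi {T} (L : chops T) (d : nat) (a : T) : quot L d :=
  exist _ (cls L d a) (ex_intro _ a eq_refl).

Definition repr {T} {L : chops T} {d : nat} (S : quot L d) : T :=
  proj1_sig (constructive_indefinite_description _ (proj2_sig S)).

Definition pi_succ {T} (L : chops T) (d : nat) (S : quot L (S d)) : quot L d :=
  pi L d (repr S).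

Definition qjoin {T} (L : chops T) d (x y : quot L d) : quot L d :=
  pi L d (ch_join L (repr x) (repr y)).
Definition qmeet {T} (L : chops T) d (x y : quot L d) : quot L d :=
  pi L d (ch_meet L (repr x) (repr y)).
Definition qdiff {T} (L : chops T) d (x y : quot L d) : quot L d :=
  pi L d (ch_diff L (repr x) (repr y)).

Definition hat {T} (L : chops T) : Type :=
  { x : forall d, quot L d | forall d, pi_succ L d (x (S d)) = x d }.

Definition is_topology {X : Type} (tau : (X -> Prop) -> Prop) : Prop :=
  tau (fun _ => True) /\
  (forall F : (X -> Prop) -> Prop, (forall V, F V -> tau V) ->
     tau (fun x => exists V, F V /\ V x)) /\
  (forall U V, tau U -> tau V -> tau (fun x => U x /\ V x)).

(* projective topology on \hat L from the discrete topologies on the L/dL: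
   the smallest topology containing all preimages of the projections *)
Definition proj_open {T} (L : chops T) (U : hat L -> Prop) : Prop :=
  forall tau : (hat L -> Prop) -> Prop, is_topology tau ->
    (forall d (V : quot L d -> Prop), tau (fun x => V (proj1_sig x d))) ->
    tau U.

Definition metric_open {X : Type} (dX : X -> X -> R) (U : X -> Prop) : Prop :=
  forall x, U x -> exists eps, 0 < eps /\ forall y, dX x y < eps -> U y.

Definition is_metric {X : Type} (dX : X -> X -> R) : Prop :=
  (forall x y, 0 <= dX x y) /\ (forall x, dX x x = 0) /\
  (forall x y, dX x y = dX y x) /\
  (forall x y z, dX x z <= dX x y + dX y z) /\
  (forall x y, dX x y = 0 -> x = y).

Definition is_complete {X : Type} (dX : X -> X -> R) : Prop :=
  forall u : nat -> X,
    (forall eps, 0 < eps -> exists N, forall m n, (N <= m)%nat -> (N <= n)%nat ->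
        dX (u m) (u n) < eps) ->
    exists l, forall eps, 0 < eps -> exists N, forall n, (N <= n)%nat -> dX (u n) l < eps.

Definition continuous_m {X Y : Type} (dX : X -> X -> R) (dY : Y -> Y -> R)
  (f : X -> Y) : Prop :=
  forall x eps, 0 < eps -> exists delta, 0 < delta /\
    forall y, dX x y < delta -> dY (f x) (f y) < eps.

Definition unif_continuous_m {X Y : Type} (dX : X -> X -> R) (dY : Y -> Y -> R)
  (f : X -> Y) : Prop :=
  forall eps, 0 < eps -> exists delta, 0 < delta /\
    forall x y, dX x y < delta -> dY (f x) (f y) < eps.

Definition dense_image {X X' : Type} (dX' : X' -> X' -> R) (i : X -> X') : Prop :=
  forall z eps, 0 < eps -> exists x, dX' z (i x) < eps.

Definition is_hausdorff_completion {X X' : Type} (dX : X -> X -> R)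
  (dX' : X' -> X' -> R) (i : X -> X') : Prop :=
  is_metric dX' /\ is_complete dX' /\ continuous_m dX dX' i /\ dense_image dX' i /\
  forall (Y : Type) (dY : Y -> Y -> R), is_metric dY -> is_complete dY ->
    forall f : X -> Y, unif_continuous_m dX dY f ->
      exists g : X' -> Y, continuous_m dX' dY g /\ (forall x, g (i x) = f x) /\
        forall g' : X' -> Y, continuous_m dX' dY g' -> (forall x, g' (i x) = f x) ->
          forall z, g' z = g z.

(* Main.v *)
Require Import Defs.
From Stdlib Require Import Reals Lia Lra Classical ClassicalEpsilon FunctionalExtensionality PropExtensionality ProofIrrelevance.
Module ZW.
From mathcomp Require Import all_boot classical_sets boolp.
Local Open Scope classical_set_scope.
Lemma zorn_union (T : Type) (P : (T -> Prop) -> Prop) :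
 (forall F : (T->Prop) -> Prop, (forall X, F X -> P X) ->
    (forall X Y, F X -> F Y -> (forall x, X x -> Y x) \/ (forall x, Y x -> X x)) ->
    P (fun x => exists X, F X /\ X x)) ->
 exists A, P A /\ forall B, (forall x, A x -> B x) -> P B -> forall x, B x -> A x.
Proof.
move=> H.
have : exists A, P A /\ forall B, A `<` B -> ~ P B.
  apply: Zorn_bigcup.
  move=> F FP Ftot.
  have -> : (\bigcup_(X in F) X) = (fun x => exists X, F X /\ X x).
    rewrite funeqE => x; rewrite propeqE; split => [[X FX Xx]|[X [FX Xx]]]; exists X => //.
  apply: H.
    move=> X FX; exact: FP.
  move=> X Y FX FY; case: (Ftot X Y FX FY) => h; [left|right] => x; exact: h.
case=> A [PA Amax].
exists A; split => // B AB PB x Bx.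
apply: contrapT => nAx.
apply: (Amax B) => //.
split; first by move=> y; exact: AB.
move=> BA; apply: nAx; exact: BA.
Qed.
End ZW.

Section CH.
Context {T : Type} {M : chops T} (HM : is_coHeyting M).
Local Notation J := (ch_join M).
Local Notation Me := (ch_meet M).
Local Notation D := (ch_diff M).
Local Notation Z := (ch_zero M).
Local Notation O := (ch_one M).
Local Notation le := (ch_le M).

Lemma jA a b c : J a (J b c) = J (J a b) c. Proof. destruct HM as [H _]; apply H. Qed.
Lemma jC a b : J a b = J b a. Proof. destruct HM as [_ [H _]]; apply H. Qed.
Lemma mA a b c : Me a (Me b c) = Me (Me a b) c. Proof. destruct HM as [_ [_ [H _]]]; apply H. Qed.
Lemma mC a b : Me a b = Me b a. Proof. destruct HM as [_ [_ [_ [H _]]]]; apply H. Qed.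
Lemma ab1 a b : J a (Me a b) = a. Proof. destruct HM as [_ [_ [_ [_ [H _]]]]]; apply H. Qed.
Lemma ab2 a b : Me a (J a b) = a. Proof. destruct HM as [_ [_ [_ [_ [_ [H _]]]]]]; apply H. Qed.
Lemma dst a b c : Me a (J b c) = J (Me a b) (Me a c). Proof. destruct HM as [_ [_ [_ [_ [_ [_ [H _]]]]]]]; apply H. Qed.
Lemma j0 a : J Z a = a. Proof. destruct HM as [_ [_ [_ [_ [_ [_ [_ [H _]]]]]]]]; apply H. Qed.
Lemma m1 a : Me O a = a. Proof. destruct HM as [_ [_ [_ [_ [_ [_ [_ [_ [H _]]]]]]]]]; apply H. Qed.
Lemma adj a b c : le a (J b c) <-> le (D a b) c. Proof. destruct HM as [_ [_ [_ [_ [_ [_ [_ [_ [_ H]]]]]]]]]; apply H. Qed.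

Lemma adjL a b c : le a (J b c) -> le (D a b) c. Proof. apply (proj1 (adj a b c)). Qed.
Lemma adjR a b c : le (D a b) c -> le a (J b c). Proof. apply (proj2 (adj a b c)). Qed.
Lemma jj a : J a a = a. Proof. rewrite <- (ab2 a a) at 2. apply ab1. Qed.
Lemma mm a : Me a a = a. Proof. rewrite <- (ab1 a a) at 2. apply ab2. Qed.
Lemma le_refl a : le a a. Proof. apply jj. Qed.
Lemma le_trans a b c : le a b -> le b c -> le a c.
Proof. unfold ch_le; intros H1 H2. rewrite <- H2, jA, H1. reflexivity. Qed.
Lemma le_antisym a b : le a b -> le b a -> a = b.
Proof. unfold ch_le; intros H1 H2. rewrite <- H1, jC; symmetry; exact H2. Qed.
Lemma le_jl a b : le a (J a b). Proof. unfold ch_le. rewrite jA, jj. reflexivity. Qed.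
Lemma le_jr a b : le b (J a b). Proof. rewrite jC; apply le_jl. Qed.
Lemma j_lub a b c : le a c -> le b c -> le (J a b) c.
Proof. unfold ch_le; intros H1 H2. rewrite <- jA, H2, H1. reflexivity. Qed.
Lemma le_meet a b : le a b <-> Me a b = a.
Proof. unfold ch_le; split; intro H.
- rewrite <- H. apply ab2.
- rewrite <- H, jC, mC. apply ab1. Qed.
Lemma m_le_l a b : le (Me a b) a. Proof. apply le_meet. rewrite mC, mA, mm. reflexivity. Qed.
Lemma m_le_r a b : le (Me a b) b. Proof. rewrite mC; apply m_le_l. Qed.
Lemma m_glb a b c : le c a -> le c b -> le c (Me a b).
Proof. rewrite !le_meet; intros H1 H2. rewrite mA, H1, H2. reflexivity. Qed.
Lemma le_0 a : le Z a. Proof. apply j0. Qed.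
Lemma le_1 a : le a O. Proof. apply le_meet. rewrite mC. apply m1. Qed.
Lemma j_mono a b c d : le a b -> le c d -> le (J a c) (J b d).
Proof. intros H1 H2; apply j_lub.
 - eapply le_trans; [exact H1| apply le_jl].
 - eapply le_trans; [exact H2| apply le_jr]. Qed.
Lemma m_mono a b c d : le a b -> le c d -> le (Me a c) (Me b d).
Proof. intros H1 H2; apply m_glb.
 - eapply le_trans; [apply m_le_l| exact H1].
 - eapply le_trans; [apply m_le_r| exact H2]. Qed.
Lemma jZ a : J a Z = a. Proof. rewrite jC; apply j0. Qed.
Lemma le_0_eq a : le a Z -> a = Z.
Proof. intro H; apply le_antisym; auto using le_0. Qed.

Lemma d_cover a b : le a (J b (D a b)). Proof. apply adjR, le_refl. Qed.
Lemma d_mono a a' b : le a a' -> le (D a b) (D a' b).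
Proof. intro H. apply adjL. eapply le_trans; [exact H| apply (d_cover a' b)]. Qed.
Lemma d_anti a b b' : le b b' -> le (D a b') (D a b).
Proof. intro H. apply adjL. eapply le_trans; [apply (d_cover a b)|]. apply j_mono; auto using le_refl. Qed.
Lemma d_le a b : le (D a b) a. Proof. apply adjL, le_jr. Qed.
Lemma d_zero a b : D a b = Z <-> le a b.
Proof. split; intro H.
- assert (H1 : le (D a b) Z) by (rewrite H; apply le_refl).
  apply adjR in H1. rewrite jZ in H1. exact H1.
- apply le_0_eq. apply adjL. rewrite jZ. exact H. Qed.
Lemma yoneda p q : (forall x, le p x <-> le q x) -> p = q.
Proof. intro H. apply le_antisym; [apply H| apply H]; apply le_refl. Qed.
Lemma d_jl a a' b : D (J a a') b = J (D a b) (D a' b).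
Proof. apply le_antisym.
- apply adjL. rewrite jA. apply j_lub.
  + eapply le_trans; [apply (d_cover a b)| apply le_jl].
  + eapply le_trans; [apply (d_cover a' b)|]. apply j_mono; [apply le_jl| apply le_refl].
- apply j_lub; apply d_mono; auto using le_jl, le_jr. Qed.
Lemma d_jr a b c : D a (J b c) = D (D a b) c.
Proof. apply yoneda; intro x. rewrite <- !adj. rewrite jA. reflexivity. Qed.
Lemma d_0r a : D a Z = a.
Proof. apply yoneda; intro x. rewrite <- adj, j0. reflexivity. Qed.
Lemma d_0l a : D Z a = Z.
Proof. apply d_zero, le_0. Qed.
Lemma d_self a : D a a = Z. Proof. apply d_zero, le_refl. Qed.
Lemma d_comm a b c : D (D a b) c = D (D a c) b.
Proof. rewrite <- !d_jr, jC. reflexivity. Qed.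
Lemma d_tri a b c : le (D a c) (J (D a b) (D b c)).
Proof. apply adjL. eapply le_trans; [apply (d_cover a b)|]. apply j_lub.
  - eapply le_trans; [apply (d_cover b c)|]. apply j_mono; [apply le_refl| apply le_jr].
  - eapply le_trans; [apply (le_jl _ (D b c))| apply le_jr]. Qed.
Lemma d_jj a b c : le (D (J a c) (J b c)) (D a b).
Proof. apply adjL. apply j_lub.
  - eapply le_trans; [apply d_cover|]. apply j_mono; [apply le_jl|apply le_refl].
  - eapply le_trans; [apply le_jr|]. apply le_jl. Qed.
Lemma d_mm a b c : le (D (Me a c) (Me b c)) (D a b).
Proof. apply adjL. eapply le_trans.
  - apply (m_mono _ _ c c (d_cover a b) (le_refl c)).
  - rewrite mC, dst. apply j_mono; [rewrite mC; apply le_refl| apply m_le_r]. Qed.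
Lemma d_dl a b c : le (D (D a c) (D b c)) (D a b).
Proof. apply adjL. apply adjL. eapply le_trans; [apply (d_cover a b)|]. apply j_lub.
  - eapply le_trans; [apply (d_cover b c)|]. apply j_mono; [apply le_refl| apply le_jl].
  - eapply le_trans; [apply (le_jr (D b c))| apply le_jr]. Qed.
Lemma d_dr a b c : le (D (D c a) (D c b)) (D b a).
Proof. apply adjL. apply adjL. eapply le_trans; [apply (d_cover c b)|]. apply j_lub.
  - eapply le_trans; [apply (d_cover b a)|]. apply j_mono; [apply le_refl| apply le_jr].
  - eapply le_trans; [apply (le_jl _ (D b a))| apply le_jr]. Qed.

Definition sd a b := J (D a b) (D b a).
Lemma sd_comm a b : sd a b = sd b a. Proof. unfold sd; apply jC. Qed.
Lemma sd_self a : sd a a = Z. Proof. unfold sd; rewrite d_self, jj; reflexivity. Qed.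

Definition isIdeal (I : T -> Prop) :=
  I Z /\ (forall a b, le a b -> I b -> I a) /\ (forall a b, I a -> I b -> I (J a b)).
Section Ideal.
Variable I : T -> Prop.
Variable HI : isIdeal I.
Lemma I0 : I Z. Proof. apply HI. Qed.
Lemma Idown a b : le a b -> I b -> I a. Proof. apply HI. Qed.
Lemma Ij a b : I a -> I b -> I (J a b). Proof. apply HI. Qed.
Lemma Ij_inv a b : I (J a b) -> I a /\ I b.
Proof. intro H; split; eapply Idown; try exact H; [apply le_jl| apply le_jr]. Qed.
Definition eqv a b := I (sd a b).
Lemma eqv_refl a : eqv a a. Proof. unfold eqv; rewrite sd_self; apply I0. Qed.
Lemma eqv_sym a b : eqv a b -> eqv b a. Proof. unfold eqv; rewrite sd_comm; auto. Qed.
Lemma eqv_trans a b c : eqv a b -> eqv b c -> eqv a c.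
Proof. unfold eqv, sd; intros H1 H2. apply Ij_inv in H1; apply Ij_inv in H2.
  destruct H1, H2. apply Ij.
  - eapply Idown; [apply (d_tri a b c)| apply Ij; auto].
  - eapply Idown; [apply (d_tri c b a)| apply Ij; auto]. Qed.
Lemma eqv_of a b : I (D a b) -> I (D b a) -> eqv a b.
Proof. intros; apply Ij; auto. Qed.
Lemma eqv_l a b : eqv a b -> I (D a b). Proof. intro H; apply Ij_inv in H; apply H. Qed.
Lemma eqv_r a b : eqv a b -> I (D b a). Proof. intro H; apply Ij_inv in H; apply H. Qed.
Lemma eqv_j a b c d : eqv a b -> eqv c d -> eqv (J a c) (J b d).
Proof. intros H1 H2. apply eqv_trans with (J b c).
  - apply eqv_of; (eapply Idown; [apply d_jj|]); eauto using eqv_l, eqv_r.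
  - rewrite (jC b c), (jC b d). apply eqv_of; (eapply Idown; [apply d_jj|]); eauto using eqv_l, eqv_r. Qed.
Lemma eqv_m a b c d : eqv a b -> eqv c d -> eqv (Me a c) (Me b d).
Proof. intros H1 H2. apply eqv_trans with (Me b c).
  - apply eqv_of; (eapply Idown; [apply d_mm|]); eauto using eqv_l, eqv_r.
  - rewrite (mC b c), (mC b d). apply eqv_of; (eapply Idown; [apply d_mm|]); eauto using eqv_l, eqv_r. Qed.
Lemma eqv_d a b c d : eqv a b -> eqv c d -> eqv (D a c) (D b d).
Proof. intros H1 H2. apply eqv_trans with (D b c).
  - apply eqv_of; (eapply Idown; [apply d_dl|]); eauto using eqv_l, eqv_r.
  - apply eqv_of; (eapply Idown; [apply d_dr|]); eauto using eqv_l, eqv_r. Qed.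
Lemma eqv_zero a : eqv a Z <-> I a.
Proof. unfold eqv, sd. rewrite d_0r, d_0l, jZ. tauto. Qed.
Lemma eqv_le a b : eqv (J a b) b <-> I (D a b).
Proof. unfold eqv, sd. rewrite d_jl, d_self, jZ.
  assert (D b (J a b) = Z) by (apply d_zero, le_jr). rewrite H, jZ. tauto. Qed.
End Ideal.

Local Notation P := (is_prime_filter M).
Definition incl (q p : T -> Prop) := forall x, q x -> p x.

Lemma pf_one p : P p -> p O. Proof. intros H; apply H. Qed.
Lemma pf_zero p : P p -> ~ p Z. Proof. intros H; apply H. Qed.
Lemma pf_up p a b : P p -> p a -> le a b -> p b. Proof. intros H; apply H. Qed.
Lemma pf_meet p a b : P p -> p a -> p b -> p (Me a b). Proof. intros H; apply H. Qed.
Lemma pf_prime p a b : P p -> p (J a b) -> p a \/ p b. Proof. intros H; apply H. Qed.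
Lemma pf_meet_inv p a b : P p -> p (Me a b) -> p a /\ p b.
Proof. intros H H1; split; eapply pf_up; eauto using m_le_l, m_le_r. Qed.
Lemma pf_ext p p' : (forall x, p x <-> p' x) -> P p -> P p'.
Proof. intros E [H1 [H2 [H3 [H4 H5]]]]. repeat split.
 - apply E; auto.
 - rewrite <- E; auto.
 - intros a b Ha Hab. apply E. apply E in Ha. eauto.
 - intros a b Ha Hb. apply E. apply E in Ha. apply E in Hb. eauto.
 - intros a b Hab. apply E in Hab. destruct (H5 a b Hab); [left|right]; apply E; auto. Qed.

Lemma height_S n : forall p, height_ge M p (S n) -> height_ge M p n.
Proof. induction n as [|n IH]; intros p H; simpl in *; auto.
  destruct H as [q [Hq [Hs Hh]]]. exists q; split; [exact Hq| split; [exact Hs| apply IH, Hh]]. Qed.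
Lemma height_le k n p : (k <= n)%nat -> height_ge M p n -> height_ge M p k.
Proof. intros Hk; induction Hk; auto. intro H; apply IHHk, height_S, H. Qed.
Lemma in_dL_mono k n a : (k <= n)%nat -> in_dL M n a -> in_dL M k a.
Proof. intros Hk H p Hp Ha. eapply height_le; eauto. Qed.
Lemma in_dL_S n a : in_dL M (S n) a -> in_dL M n a.
Proof. apply in_dL_mono; lia. Qed.
Lemma in_dL_0 a : in_dL M 0 a. Proof. intros p _ _; simpl; auto. Qed.
Lemma Idl d : isIdeal (in_dL M d).
Proof. repeat split.
 - intros p Hp H0. exfalso; eapply pf_zero; eauto.
 - intros a b Hab Hb p Hp Ha. apply Hb; auto. eapply pf_up; eauto.
 - intros a b Ha Hb p Hp Hj. destruct (pf_prime _ _ _ Hp Hj); auto. Qed.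

Definition isFilt (A : T -> Prop) := (forall a b, A a -> le a b -> A b) /\ (forall a b, A a -> A b -> A (Me a b)).

Lemma PFT (I : T -> Prop) v : isIdeal I -> ~ I v ->
  exists q, P q /\ q v /\ forall x, q x -> ~ I x.
Proof.
  intros HI Hv.
  set (Phi := fun A : T -> Prop => (forall x, ~ A x) \/ (isFilt A /\ A v /\ forall x, A x -> ~ I x)).
  destruct (@ZW.zorn_union _ Phi) as [A [PA Amax]].
  { intros F FP Ftot. destruct (classic (exists x X, F X /\ X x)) as [[x0 [X0 [FX0 X0x]]]|Hn].
    - right. assert (FF : forall X, F X -> (exists y, X y) -> isFilt X /\ X v /\ forall x, X x -> ~ I x).
      { intros X FX [y Xy]. destruct (FP X FX) as [h|h]; [exfalso; eapply h; eauto| exact h]. }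
      repeat split.
      + intros a b [X [FX Xa]] Hab. exists X; split; auto. eapply (proj1 (proj1 (FF X FX (ex_intro _ a Xa)))); eauto.
      + intros a b [X [FX Xa]] [Y [FY Yb]]. destruct (Ftot X Y FX FY) as [h|h].
        * exists Y; split; auto. apply (proj2 (proj1 (FF Y FY (ex_intro _ b Yb)))); auto.
        * exists X; split; auto. apply (proj2 (proj1 (FF X FX (ex_intro _ a Xa)))); auto.
      + exists X0; split; auto. apply (FF X0 FX0 (ex_intro _ x0 X0x)).
      + intros x [X [FX Xx]]. apply (FF X FX (ex_intro _ x Xx)); auto.
    - left. intros x [X [FX Xx]]. apply Hn; eauto. }
  assert (HG : Phi (fun x => le v x)).
  { right. repeat split.
    - intros a b Ha Hb; eapply le_trans; eauto.
    - intros a b Ha Hb; apply m_glb; auto.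
    - apply le_refl.
    - intros x Hx HIx. apply Hv. eapply Idown; eauto. }
  destruct PA as [Aempty|[[Aup Ameet] [Av Adisj]]].
  { exfalso. apply (Aempty v). apply (Amax (fun x => le v x)); auto.
    - intros x Ax; exfalso; eapply Aempty; eauto.
    - apply le_refl. }
  assert (AO : A O) by (eapply Aup; eauto using le_1).
  assert (Amax' : forall G, isFilt G -> (forall x, A x -> G x) -> (forall x, G x -> ~ I x) -> forall x, G x -> A x).
  { intros G HG' AG GI. apply Amax; auto. right; repeat split; try apply HG'; auto. }
  exists A; repeat split; auto.
  - intros H0. apply (Adisj _ H0). apply I0; auto.
  - intros x y Hxy. apply NNPP; intros Hn. apply not_or_and in Hn. destruct Hn as [Hx Hy].
    assert (K : forall z, ~ A z -> exists g, A g /\ I (Me g z)).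
    { intros z Hz. apply NNPP; intros Hn.
      set (G := fun w => exists g, A g /\ le (Me g z) w).
      assert (GA : forall w, G w -> A w).
      { apply Amax'.
        - split.
          + intros a b [g [Ag Hg]] Hab. exists g; split; auto. eapply le_trans; eauto.
          + intros a b [g [Ag Hg]] [g' [Ag' Hg']]. exists (Me g g'); split; auto.
            apply m_glb.
            * eapply le_trans; [|exact Hg]. apply m_mono; [apply m_le_l| apply le_refl].
            * eapply le_trans; [|exact Hg']. apply m_mono; [apply m_le_r| apply le_refl].
        - intros a Aa. exists a; split; auto. apply m_le_l.
        - intros w [g [Ag Hg]] Iw. apply Hn. exists g; split; auto. eapply Idown; eauto. }
      apply Hz, GA. exists v; split; auto. apply m_le_r. }
    destruct (K x Hx) as [g [Ag Ig]]. destruct (K y Hy) as [g' [Ag' Ig']].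
    assert (Ah : A (Me (Me g g') (J x y))) by (apply Ameet; [apply Ameet|]; auto).
    apply (Adisj _ Ah). apply (Idown _ HI _ (J (Me g x) (Me g' y))); [| apply (Ij _ HI _ _ Ig Ig')].
    rewrite dst. apply j_mono; apply m_mono; auto using m_le_l, m_le_r, le_refl.
Qed.

Lemma crit s v c : P s -> s (D v c) -> exists q, P q /\ incl q s /\ q v /\ ~ q c.
Proof.
  intros Hs Hvc.
  set (I := fun x => exists e, ~ s e /\ le x (J e c)).
  assert (HI : isIdeal I).
  { repeat split.
    - exists Z; split; [apply pf_zero; auto| apply le_0].
    - intros a b Hab [e [He Hb]]. exists e; split; auto. eapply le_trans; eauto.
    - intros a b [e [He Ha]] [e' [He' Hb]]. exists (J e e'); split.
      + intro H. destruct (pf_prime _ _ _ Hs H); auto.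
      + apply j_lub.
        * eapply le_trans; [exact Ha|]. apply j_mono; [apply le_jl| apply le_refl].
        * eapply le_trans; [exact Hb|]. apply j_mono; [apply le_jr| apply le_refl]. }
  destruct (PFT I v HI) as [q [Hq [qv qI]]].
  { intros [e [He Hv]]. apply He. eapply pf_up; eauto. apply adjL. rewrite jC; auto. }
  exists q; split; [exact Hq| split; [|split; [exact qv|]]].
  - intros x qx. apply NNPP; intro Hn. apply (qI x qx). exists x; split; auto. apply le_jl.
  - intro qc. apply (qI c qc). exists Z; split; [apply pf_zero; auto| rewrite j0; apply le_refl].
Qed.

Lemma meets d : forall s, P s -> height_ge M s d -> exists a, s a /\ in_dL M d a.
Proof.
  induction d as [|d IH]; intros s Hs Hh.
  - exists O; split; [apply pf_one; auto| apply in_dL_0].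
  - destruct Hh as [q [Hq [[qs [c [sc qc]]] hq]]].
    destruct (IH q Hq hq) as [b [qb db]].
    exists (Me c (D b c)); split.
    + apply pf_meet; auto. apply qs.
      destruct (pf_prime _ _ _ Hq (pf_up _ _ _ Hq qb (d_cover b c))) as [h|h]; [contradiction|auto].
    + intros t Ht ta. apply pf_meet_inv in ta; auto. destruct ta as [tc tbc].
      destruct (crit t b c Ht tbc) as [q' [Hq' [q't [q'b q'c]]]].
      exists q'; split; [exact Hq'| split; [split; [exact q't| exists c; split; auto]| apply db; auto]].
Qed.

Lemma char_up d a b : in_dL M d b -> le a (D b a) -> in_dL M (S d) a.
Proof.
  intros db Hab t Ht ta.
  destruct (crit t b a Ht (pf_up _ _ _ Ht ta Hab)) as [q' [Hq' [q't [q'b q'a]]]].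
  exists q'; split; [exact Hq'| split; [split; [exact q't| exists a; split; auto]| apply db; auto]].
Qed.

Lemma char_down d a : in_dL M (S d) a -> exists b, in_dL M d b /\ le a (D b a).
Proof.
  intros Ha.
  set (I := fun x => exists b, in_dL M d b /\ le x (D b a)).
  assert (HI : isIdeal I).
  { repeat split.
    - exists Z; split; [apply I0, Idl| apply le_0].
    - intros x y Hxy [b [db Hy]]. exists b; split; auto. eapply le_trans; eauto.
    - intros x y [b [db Hx]] [b' [db' Hy]]. exists (J b b'); split.
      + apply Ij; auto; apply Idl.
      + rewrite d_jl. apply j_mono; auto. }
  destruct (classic (I a)) as [h|h]; [exact h|exfalso].
  destruct (PFT I a HI h) as [s [Hs [sa sI]]].
  set (Phi := fun A : T -> Prop => (forall x, ~ A x) \/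
     (P (fun x => ~ A x) /\ ~ A a /\ forall x, ~ A x -> s x)).
  destruct (@ZW.zorn_union _ Phi) as [A [PA Amax]].
  { intros F FP Ftot. destruct (classic (exists x X, F X /\ X x)) as [[x0 [X0 [FX0 X0x]]]|Hn].
    - right. assert (FF : forall X, F X -> (exists y, X y) -> P (fun x => ~ X x) /\ ~ X a /\ forall x, ~ X x -> s x).
      { intros X FX [y Xy]. destruct (FP X FX) as [h'|h']; [exfalso; eapply h'; eauto| exact h']. }
      assert (FF' : forall X, F X -> (forall x, ~ X x) \/ (P (fun x => ~ X x) /\ ~ X a /\ forall x, ~ X x -> s x)) by auto.
      assert (E : forall x, ~ (exists X, F X /\ X x) <-> forall X, F X -> ~ X x) by firstorder.
      split; [|split].
      + repeat split.
        * intros [X [FX XO]]. destruct (FF' X FX) as [h'|h']; [eapply h'; eauto|]. apply (pf_one _ (proj1 h')); auto.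
        * intro H0. pose proof (proj1 (E Z) H0) as H0'.
          apply (pf_zero _ (proj1 (FF X0 FX0 (ex_intro _ x0 X0x)))). apply H0'; auto.
        * intros u w Hu Huw. apply (proj2 (E _)). intros X FX Xw. destruct (FF' X FX) as [h'|h']; [eapply h'; eauto|].
          revert Xw. apply (pf_up _ u w (proj1 h')); auto. exact (proj1 (E u) Hu X FX).
        * intros u w Hu Hw. apply (proj2 (E _)). intros X FX Xw. destruct (FF' X FX) as [h'|h']; [eapply h'; eauto|].
          revert Xw. apply (pf_meet _ _ _ (proj1 h')); [exact (proj1 (E u) Hu X FX)| exact (proj1 (E w) Hw X FX)].
        * intros u w Huw. apply NNPP; intro Hn'. apply not_or_and in Hn'. destruct Hn' as [Hu Hw].
          apply NNPP in Hu. apply NNPP in Hw. destruct Hu as [X1 [FX1 X1u]]. destruct Hw as [X2 [FX2 X2w]].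
          pose proof (proj1 (E _) Huw) as Huw'.
          destruct (Ftot X1 X2 FX1 FX2) as [h'|h'].
          -- destruct (FF X2 FX2 (ex_intro _ w X2w)) as [HP2 _].
             destruct (pf_prime _ _ _ HP2 (Huw' X2 FX2)); auto.
          -- destruct (FF X1 FX1 (ex_intro _ u X1u)) as [HP1 _].
             destruct (pf_prime _ _ _ HP1 (Huw' X1 FX1)); auto.
      + intros [X [FX Xa]]. destruct (FF' X FX) as [h'|h']; [eapply h'; eauto| apply h'; auto].
      + intros x Hx. apply (FF X0 FX0 (ex_intro _ x0 X0x)). intro X0x'. apply Hx; eauto.
    - left. intros x [X [FX Xx]]. apply Hn; eauto. }
  assert (Ps' : P (fun x => ~ ~ s x)).
  { eapply pf_ext; [|exact Hs]. intro x; split; [tauto| apply NNPP]. }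
  destruct PA as [Aempty|[Hq [qa qs]]].
  { apply (pf_zero _ Hs). apply NNPP; intro Hz.
    apply (Aempty Z). apply (Amax (fun x => ~ s x)); auto.
    - intros x Ax; exfalso; eapply Aempty; eauto.
    - right; split; [exact Ps'| split]; [tauto| intros x Hx; apply NNPP; auto]. }
  destruct (Ha _ Hq qa) as [q' [Hq' [[q'q [x [qx q'x]]] hq']]].
  destruct (meets d q' Hq' hq') as [b [q'b db]].
  assert (q'a : q' a).
  { destruct (pf_prime _ _ _ Hq' (pf_up _ _ _ Hq' q'b (d_cover b a))) as [h'|h']; auto.
    exfalso. apply (sI (D b a)).
    - apply qs, q'q, h'.
    - exists b; split; auto; apply le_refl. }
  apply qx. apply (Amax (fun y => ~ q' y)).
  - intros y Ay q'y. apply (q'q y q'y); auto.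
  - right. split; [|split].
    + eapply pf_ext; [|exact Hq']. intro y; split; [tauto| apply NNPP].
    + tauto.
    + intros y Hy. apply qs, q'q. apply NNPP; auto.
  - exact q'x.
Qed.

Lemma N_up a b b' : le a (D b a) -> le b b' -> le a (D b' a).
Proof. intros H1 H2; eapply le_trans; [exact H1| apply d_mono; auto]. Qed.
Lemma N_join a a' b : le a (D b a) -> le a' (D b a') -> le (J a a') (D b (J a a')).
Proof. intros H1 H2.
  assert (Eb : forall x, le x (D b x) -> D b x = b).
  { intros x Hx. apply le_antisym; [apply d_le|]. eapply le_trans; [apply (d_cover b x)|].
    apply j_lub; auto; apply le_refl. }
  assert (E : D b (J a a') = b) by (rewrite d_jr, Eb, Eb; auto).
  rewrite E. apply j_lub; eapply le_trans; eauto using d_le. Qed.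

End CH.

Section QH.
Context {T : Type} (L : chops T) (HL : is_coHeyting L).
Local Notation J := (ch_join L).
Local Notation Me := (ch_meet L).
Local Notation D := (ch_diff L).
Local Notation Z := (ch_zero L).
Local Notation O := (ch_one L).
Local Notation E d := (eqv (M:=L) (in_dL L d)).

Lemma cls_eqv d a b : cls L d a b <-> E d a b. Proof. reflexivity. Qed.

Lemma exist_eq d (S1 S2 : T -> Prop) h1 h2 : S1 = S2 ->
  (exist (fun S => exists a, S = cls L d a) S1 h1 : quot L d) = exist _ S2 h2.
Proof. intro e; subst. f_equal. apply proof_irrelevance. Qed.

Lemma pi_eq d a b : pi L d a = pi L d b <-> E d a b.
Proof. split; intro H.
 - apply (f_equal (@proj1_sig _ _)) in H. simpl in H.
   assert (H1 : cls L d b b) by exact (eqv_refl HL _ (Idl d) b).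
   rewrite <- H in H1. exact H1.
 - unfold pi. apply exist_eq. apply functional_extensionality; intro x.
   apply propositional_extensionality. unfold cls. split; intro Hx.
   + change (E d b x). change (E d a x) in Hx.
     apply (eqv_trans HL _ (Idl d) b a x); auto. apply (eqv_sym HL); auto.
   + change (E d a x). change (E d b x) in Hx.
     apply (eqv_trans HL _ (Idl d) a b x); auto. Qed.

Lemma pi_repr d (S : quot L d) : pi L d (repr S) = S.
Proof. unfold repr. destruct (constructive_indefinite_description _ _) as [a Ha]. simpl.
  destruct S as [S0 h]. simpl in Ha. unfold pi. apply exist_eq. symmetry; exact Ha. Qed.

Lemma quot_ind d (S : quot L d) : exists a, S = pi L d a.
Proof. exists (repr S). symmetry; apply pi_repr. Qed.

Lemma repr_pi d a : E d (repr (pi L d a)) a.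
Proof. apply pi_eq. apply pi_repr. Qed.

Lemma qjoin_pi d a b : qjoin L d (pi L d a) (pi L d b) = pi L d (J a b).
Proof. unfold qjoin. apply pi_eq. apply eqv_j; auto using repr_pi; apply Idl. Qed.
Lemma qmeet_pi d a b : qmeet L d (pi L d a) (pi L d b) = pi L d (Me a b).
Proof. unfold qmeet. apply pi_eq. apply eqv_m; auto using repr_pi; apply Idl. Qed.
Lemma qdiff_pi d a b : qdiff L d (pi L d a) (pi L d b) = pi L d (D a b).
Proof. unfold qdiff. apply pi_eq. apply eqv_d; auto using repr_pi; apply Idl. Qed.

Lemma E_mono k n a b : (k <= n)%nat -> E n a b -> E k a b.
Proof. intros Hk H. unfold eqv in *. eapply in_dL_mono; eauto. Qed.

Lemma pi_succ_pi d a : pi_succ L d (pi L (S d) a) = pi L d a.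
Proof. unfold pi_succ. apply pi_eq. apply (E_mono d (S d)); [lia|]. apply repr_pi. Qed.

Lemma pi_zero_iff d a : pi L d a = pi L d Z <-> in_dL L d a.
Proof. rewrite pi_eq. apply eqv_zero; auto; apply Idl. Qed.

Lemma hat_ext (x y : hat L) : (forall d, proj1_sig x d = proj1_sig y d) -> x = y.
Proof. destruct x as [x hx], y as [y hy]; simpl; intro H.
  assert (x = y) by (apply functional_extensionality_dep; auto). subst.
  f_equal. apply proof_irrelevance. Qed.

Lemma hat_coh (x : hat L) n : forall k, (k <= n)%nat -> pi L k (repr (proj1_sig x n)) = proj1_sig x k.
Proof.
  induction n as [|n IH]; intros k Hk.
  - assert (k = 0%nat) by lia; subst. apply pi_repr.
  - destruct (Nat.eq_dec k (S n)) as [e|ne]; [subst; apply pi_repr|].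
    rewrite <- (IH k) by lia.
    apply pi_eq. apply (E_mono k n); [lia|]. apply pi_eq.
    rewrite pi_repr. rewrite <- (proj2_sig x n). reflexivity.
Qed.

Lemma coh_const (a : T) : forall d, pi_succ L d (pi L (S d) a) = pi L d a.
Proof. intro d; apply pi_succ_pi. Qed.

Definition hconst (a : T) : hat L := exist _ (fun d => pi L d a) (coh_const a).

Lemma coh_op (f : T -> T -> T) (Hf : forall d a b c e, E d a b -> E d c e -> E d (f a c) (f b e))
  (x y : hat L) : forall d, pi_succ L d (pi L (S d) (f (repr (proj1_sig x (S d))) (repr (proj1_sig y (S d)))))
     = pi L d (f (repr (proj1_sig x d)) (repr (proj1_sig y d))).
Proof. intro d. rewrite pi_succ_pi. apply pi_eq. apply Hf; apply pi_eq; rewrite hat_coh by lia; symmetry; apply pi_repr. Qed.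

Lemma HfJ d a b c e : E d a b -> E d c e -> E d (J a c) (J b e). Proof. apply eqv_j; auto; apply Idl. Qed.
Lemma HfM d a b c e : E d a b -> E d c e -> E d (Me a c) (Me b e). Proof. apply eqv_m; auto; apply Idl. Qed.
Lemma HfD d a b c e : E d a b -> E d c e -> E d (D a c) (D b e). Proof. apply eqv_d; auto; apply Idl. Qed.

Definition hjoin (x y : hat L) : hat L :=
  exist _ (fun d => qjoin L d (proj1_sig x d) (proj1_sig y d)) (coh_op J HfJ x y).
Definition hmeet (x y : hat L) : hat L :=
  exist _ (fun d => qmeet L d (proj1_sig x d) (proj1_sig y d)) (coh_op Me HfM x y).
Definition hdiff (x y : hat L) : hat L :=
  exist _ (fun d => qdiff L d (proj1_sig x d) (proj1_sig y d)) (coh_op D HfD x y).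

Definition H : chops (hat L) := CHOps _ (hconst Z) (hconst O) hjoin hmeet hdiff.

Lemma hval (x : hat L) d : proj1_sig x d = pi L d (repr (proj1_sig x d)).
Proof. symmetry; apply pi_repr. Qed.

Ltac qdest x d := let a := fresh "a" in let Ea := fresh "Ea" in
  destruct (quot_ind d (proj1_sig x d)) as [a Ea]; rewrite Ea.

Definition qle d (X Y : quot L d) := qjoin L d X Y = Y.
Lemma qle_pi d a b : qle d (pi L d a) (pi L d b) <-> in_dL L d (D a b).
Proof. unfold qle. rewrite qjoin_pi, pi_eq. apply eqv_le; auto; apply Idl. Qed.

Lemma hle_iff x y : ch_le H x y <-> forall d, qle d (proj1_sig x d) (proj1_sig y d).
Proof. unfold ch_le. split.
  - intros e d. unfold qle. change (hjoin x y = y) in e. change (proj1_sig (hjoin x y) d = proj1_sig y d). rewrite e. reflexivity.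
  - intro h. apply hat_ext. intro d. apply h. Qed.

Lemma HH : is_coHeyting H.
Proof.
  repeat split.
  - intros x y z. apply hat_ext; intro d; simpl. qdest x d; qdest y d; qdest z d.
    rewrite !qjoin_pi. f_equal. apply jA; auto.
  - intros x y. apply hat_ext; intro d; simpl. qdest x d; qdest y d.
    rewrite !qjoin_pi. f_equal. apply jC; auto.
  - intros x y z. apply hat_ext; intro d; simpl. qdest x d; qdest y d; qdest z d.
    rewrite !qmeet_pi. f_equal. apply mA; auto.
  - intros x y. apply hat_ext; intro d; simpl. qdest x d; qdest y d.
    rewrite !qmeet_pi. f_equal. apply mC; auto.
  - intros x y. apply hat_ext; intro d; simpl. qdest x d; qdest y d.
    rewrite qmeet_pi, qjoin_pi. f_equal. apply ab1; auto.
  - intros x y. apply hat_ext; intro d; simpl. qdest x d; qdest y d.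
    rewrite qjoin_pi, qmeet_pi. f_equal. apply ab2; auto.
  - intros x y z. apply hat_ext; intro d; simpl. qdest x d; qdest y d; qdest z d.
    rewrite !qjoin_pi, !qmeet_pi, qjoin_pi. f_equal. apply dst; auto.
  - intros x. apply hat_ext; intro d; simpl. qdest x d.
    rewrite qjoin_pi. f_equal. apply j0; auto.
  - intros x. apply hat_ext; intro d; simpl. qdest x d.
    rewrite qmeet_pi. f_equal. apply m1; auto.
  - rewrite !hle_iff. intros Hle d; specialize (Hle d); simpl in *; revert Hle;
    qdest a d; qdest b d; qdest c d; rewrite qjoin_pi, qdiff_pi, !qle_pi, d_jr; auto.
  - rewrite !hle_iff. intros Hle d; specialize (Hle d); simpl in *; revert Hle;
    qdest a d; qdest b d; qdest c d; rewrite qjoin_pi, qdiff_pi, !qle_pi, d_jr; auto.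
Qed.

Definition iota (a : T) : hat L := hconst a.

End QH.

Fixpoint accj {T} (L : chops T) (b : T) (f : nat -> T) (n : nat) : T :=
  match n with O => b | S k => ch_join L (accj L b f k) (f k) end.

Lemma height_ext {T} (M : chops T) n : forall p p', (forall x, p x <-> p' x) -> height_ge M p n -> height_ge M p' n.
Proof. destruct n as [|n]; intros p p' E h; simpl in *; auto.
  destruct h as [q [Hq [[qp [x [px qx]]] hq]]]. exists q; split; [exact Hq| split; [split|exact hq]].
  - intros y qy; apply E, qp, qy.
  - exists x; split; [apply E; auto| auto]. Qed.

Section KD.
Context {T : Type} (L : chops T) (HL : is_coHeyting L).
Local Notation J := (ch_join L).
Local Notation Me := (ch_meet L).
Local Notation D := (ch_diff L).
Local Notation Z := (ch_zero L).
Local Notation O := (ch_one L).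
Local Notation E d := (eqv (M:=L) (in_dL L d)).
Local Notation Hc := (H L HL).
Local Notation io := (iota L HL).
Local Notation HHc := (HH L HL).

Lemma iota_join a b : ch_join Hc (io a) (io b) = io (J a b).
Proof. apply hat_ext; intro d; simpl. apply qjoin_pi; auto. Qed.
Lemma iota_meet a b : ch_meet Hc (io a) (io b) = io (Me a b).
Proof. apply hat_ext; intro d; simpl. apply qmeet_pi; auto. Qed.
Lemma iota_diff a b : ch_diff Hc (io a) (io b) = io (D a b).
Proof. apply hat_ext; intro d; simpl. apply qdiff_pi; auto. Qed.
Lemma iota_le a b : ch_le L a b -> ch_le Hc (io a) (io b).
Proof. unfold ch_le; intro e. rewrite iota_join, e. reflexivity. Qed.

Lemma dirA d x : in_dL Hc d x -> proj1_sig x d = pi L d Z.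
Proof.
  intro Hx. apply NNPP; intro Hne.
  set (c := repr (proj1_sig x d)).
  assert (Hc0 : ~ in_dL L d c).
  { intro h. apply Hne. rewrite hval. apply pi_zero_iff; auto. }
  unfold in_dL in Hc0. apply not_all_ex_not in Hc0. destruct Hc0 as [p Hp0].
  apply imply_to_and in Hp0. destruct Hp0 as [Hp Hp0]. apply imply_to_and in Hp0. destruct Hp0 as [pc nh].
  assert (pnoK : forall e, p e -> ~ in_dL L d e).
  { intros e pe h. apply nh. apply h; auto. }
  assert (sat : forall a b, E d a b -> p a -> p b).
  { intros a b Eab pa. destruct (pf_prime _ _ _ Hp (pf_up _ _ _ Hp pa (d_cover HL a b))) as [h|h]; auto.
    exfalso. apply (pnoK _ h). apply (eqv_l HL _ (Idl d)); auto. }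
  set (Pp := fun y : hat L => p (repr (proj1_sig y d))).
  assert (Pp_pi : forall y a, proj1_sig y d = pi L d a -> (Pp y <-> p a)).
  { intros y a e. unfold Pp. rewrite e. split; apply sat.
    - apply repr_pi; auto.
    - apply (eqv_sym HL). apply repr_pi; auto. }
  assert (HPp : is_prime_filter Hc Pp).
  { repeat split.
    - rewrite (Pp_pi _ O); [apply pf_one; auto| reflexivity].
    - rewrite (Pp_pi _ Z); [apply pf_zero; auto| reflexivity].
    - intros y y' Hy Hyy'. apply hle_iff with (d := d) in Hyy'.
      revert Hy Hyy'. destruct (quot_ind L d (proj1_sig y d)) as [a Ea].
      destruct (quot_ind L d (proj1_sig y' d)) as [b Eb].
      rewrite (Pp_pi _ _ Ea), (Pp_pi _ _ Eb), Ea, Eb, qle_pi; auto. intros pa hab.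
      destruct (pf_prime _ _ _ Hp (pf_up _ _ _ Hp pa (d_cover HL a b))) as [h|h]; auto.
      exfalso; eapply pnoK; eauto.
    - intros y y'. destruct (quot_ind L d (proj1_sig y d)) as [a Ea].
      destruct (quot_ind L d (proj1_sig y' d)) as [b Eb].
      rewrite (Pp_pi _ _ Ea), (Pp_pi _ _ Eb), (Pp_pi (ch_meet Hc y y') (Me a b)).
      + intros; apply pf_meet; auto.
      + simpl. rewrite Ea, Eb. apply qmeet_pi; auto.
    - intros y y'. destruct (quot_ind L d (proj1_sig y d)) as [a Ea].
      destruct (quot_ind L d (proj1_sig y' d)) as [b Eb].
      rewrite (Pp_pi _ _ Ea), (Pp_pi _ _ Eb), (Pp_pi (ch_join Hc y y') (J a b)).
      + intro h; apply (pf_prime _ _ _ Hp h).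
      + simpl. rewrite Ea, Eb. apply qjoin_pi; auto. }
  assert (hP : height_ge Hc Pp d) by (apply Hx; auto).
  assert (key : forall R, is_prime_filter Hc R -> incl R Pp -> forall y, R y <-> R (io (repr (proj1_sig y d)))).
  { intros R HR RP y. set (a := repr (proj1_sig y d)).
    assert (ya : proj1_sig y d = pi L d a) by apply hval.
    assert (n1 : ~ Pp (ch_diff Hc y (io a))).
    { rewrite (Pp_pi _ Z); [apply pf_zero; auto|]. simpl. rewrite ya, qdiff_pi, d_self; auto. }
    assert (n2 : ~ Pp (ch_diff Hc (io a) y)).
    { rewrite (Pp_pi _ Z); [apply pf_zero; auto|]. simpl. rewrite ya, qdiff_pi, d_self; auto. }
    split; intro Ry.
    - destruct (pf_prime _ _ _ HR (pf_up _ _ _ HR Ry (d_cover HHc y (io a)))) as [h|h]; auto.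
      exfalso; apply n1, RP, h.
    - destruct (pf_prime _ _ _ HR (pf_up _ _ _ HR Ry (d_cover HHc (io a) y))) as [h|h]; auto.
      exfalso; apply n2, RP, h. }
  assert (prime_pull : forall R, is_prime_filter Hc R -> is_prime_filter L (fun a => R (io a))).
  { intros R HR. repeat split.
    - apply (pf_one _ HR).
    - apply (pf_zero _ HR).
    - intros a b Ra hab. apply (pf_up _ _ _ HR Ra (iota_le _ _ hab)).
    - intros a b Ra Rb. rewrite <- iota_meet. apply pf_meet; auto.
    - intros a b Rab. rewrite <- iota_join in Rab. apply (pf_prime _ _ _ HR Rab). }
  assert (chain : forall n Q, is_prime_filter Hc Q -> incl Q Pp -> height_ge Hc Q n ->
                   height_ge L (fun a => Q (io a)) n).
  { induction n as [|n IH]; intros Q HQ QP hQ; simpl; auto.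
    destruct hQ as [Q' [HQ' [[Q'Q [y [Qy Q'y]]] hQ']]].
    exists (fun a => Q' (io a)); split; [apply prime_pull; auto| split].
    - split.
      + intros a h; apply Q'Q, h.
      + exists (repr (proj1_sig y d)). split.
        * apply (proj1 (key Q HQ QP y)). auto.
        * intro h. apply Q'y. apply (proj2 (key Q' HQ' (fun z hz => QP z (Q'Q z hz)) y)). exact h.
    - apply IH; auto. intros z hz; apply QP, Q'Q, hz. }
  apply nh. apply (height_ext L d (fun a => Pp (io a))).
  - intro a. apply Pp_pi. reflexivity.
  - apply chain; auto. intros z hz; exact hz.
Qed.

Lemma dirB d : forall x, proj1_sig x d = pi L d Z -> in_dL Hc d x.
Proof.
  induction d as [|d IH]; intros x Hx.
  - apply in_dL_0.
  - pose (a' := fun e => repr (proj1_sig x (Nat.max e (S d)))).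
    assert (F1 : forall e, pi L e (a' e) = proj1_sig x e).
    { intro e. apply hat_coh; auto; lia. }
    assert (F2 : forall e, in_dL L (S d) (a' e)).
    { intro e. apply pi_zero_iff; auto. unfold a'. rewrite hat_coh by (auto; lia). exact Hx. }
    assert (F3 : forall e, in_dL L e (D (a' (S e)) (a' e))).
    { intro e. apply (eqv_l HL _ (Idl e)). apply pi_eq; auto. rewrite F1. unfold a'.
      rewrite hat_coh by (auto; lia). reflexivity. }
    pose (q := fun e => D (a' (S e)) (a' e)).
    assert (Fq : forall e, in_dL L (S (Nat.max (pred e) d)) (q e)).
    { intro e. destruct (Compare_dec.le_lt_dec e (S d)) as [h|h].
      - replace (S (Nat.max (pred e) d)) with (S d) by lia.
        apply (Idown _ (Idl (S d)) _ (a' (S e))); [apply d_le; auto| apply F2].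
      - replace (S (Nat.max (pred e) d)) with e by lia. apply F3. }
    assert (Hβ : forall e, exists b, in_dL L (Nat.max (pred e) d) b /\ ch_le L (q e) (D b (q e))).
    { intro e. apply char_down; auto. }
    destruct (char_down HL d _ (F2 0%nat)) as [b0 [Hb0d Hb0N]].
    pose (β := fun e => proj1_sig (constructive_indefinite_description _ (Hβ e))).
    assert (Hβs : forall e, in_dL L (Nat.max (pred e) d) (β e) /\ ch_le L (q e) (D (β e) (q e))).
    { intro e. exact (proj2_sig (constructive_indefinite_description _ (Hβ e))). }
    pose (s := accj L (a' 0%nat) q). pose (B := accj L b0 β).
    assert (G1 : forall e, ch_le L (a' e) (s e)).
    { induction e as [|e IHe]; simpl.
      - apply le_refl; auto.
      - eapply le_trans; auto; [apply (d_cover HL (a' (S e)) (a' e))|].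
        apply j_mono; auto; apply le_refl; auto. }
    assert (G2 : forall e, ch_le L (s e) (D (B e) (s e))).
    { induction e as [|e IHe]; simpl.
      - exact Hb0N.
      - apply N_join; auto.
        + eapply N_up; eauto. apply le_jl; auto.
        + eapply N_up; auto; [apply (proj2 (Hβs e))|]. apply le_jr; auto. }
    assert (G3 : forall e, in_dL L d (B e)).
    { induction e as [|e IHe]; [exact Hb0d|].
      change (in_dL L d (J (B e) (β e))).
      apply (Ij _ (Idl d)); [exact IHe|]. apply (in_dL_mono d (Nat.max (pred e) d)); [lia| apply Hβs]. }
    assert (G4 : forall e, E e (B (S (S e))) (B (S e))).
    { intro e. change (E e (J (B (S e)) (β (S e))) (B (S e))). rewrite jC by auto.
      apply (proj2 (eqv_le HL (in_dL L e) _ _)).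
      apply (Idown _ (Idl e) _ (β (S e))); [apply d_le; auto|].
      apply (in_dL_mono e (Nat.max (pred (S e)) d)); [lia| apply Hβs]. }
    assert (coh : forall e, pi_succ L e (pi L (S e) (B (S (S e)))) = pi L e (B (S e))).
    { intro e. rewrite pi_succ_pi; auto. apply pi_eq; auto. }
    pose (v := exist _ (fun e => pi L e (B (S e))) coh : hat L).
    assert (Hv : proj1_sig v d = pi L d Z) by (simpl; apply pi_zero_iff; auto).
    assert (IHv := IH v Hv).
    assert (Hle : ch_le Hc x (ch_diff Hc v x)).
    { apply hle_iff. intro e. simpl. rewrite <- (F1 e). rewrite qdiff_pi, qle_pi by auto.
      assert (Z0 : D (a' e) (D (B (S e)) (a' e)) = Z).
      { assert (a's : ch_le L (a' e) (s (S e))).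
        { apply (le_trans HL _ (s e)); [apply G1| apply (le_jl HL (s e) (q e))]. }
        apply d_zero; auto. apply (le_trans HL _ (s (S e))); [exact a's|].
        apply (le_trans HL _ (D (B (S e)) (s (S e)))); [apply G2| apply d_anti; auto]. }
      rewrite Z0. apply I0, Idl. }
    exact (char_up HHc d x v IHv Hle).
Qed.

Lemma Kd d x : in_dL Hc d x <-> proj1_sig x d = pi L d Z.
Proof. split; [apply dirA| apply dirB]. Qed.

Lemma Kd_sym d x y : in_dL Hc d (sym_diff Hc x y) <-> proj1_sig x d = proj1_sig y d.
Proof. rewrite Kd. simpl. destruct (quot_ind L d (proj1_sig x d)) as [a Ea].
  destruct (quot_ind L d (proj1_sig y d)) as [b Eb]. rewrite Ea, Eb.
  rewrite !qdiff_pi, qjoin_pi, pi_zero_iff, pi_eq by auto. reflexivity. Qed.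

Lemma KL_sym d a b : in_dL L d (sym_diff L a b) <-> pi L d a = pi L d b.
Proof. rewrite pi_eq by auto. reflexivity. Qed.

End KD.

Lemma half_pos n : 0 < (/2)^n.
Proof. apply pow_lt. lra. Qed.
Lemma half_S n : (/2)^(S n) < (/2)^n.
Proof. simpl. pose proof (half_pos n). lra. Qed.
Lemma half_mono m n : (m <= n)%nat -> (/2)^n <= (/2)^m.
Proof. intro h; induction h; [lra|]. pose proof (half_S m0). lra. Qed.
Lemma half_le n m : (/2)^n <= (/2)^m <-> (m <= n)%nat.
Proof. split; [|apply half_mono]. intro h. destruct (Nat.le_gt_cases m n) as [h'|h']; auto.
  exfalso. pose proof (half_mono (S n) m h'). pose proof (half_S n). lra. Qed.
Lemma half_lt n m : (/2)^n < (/2)^m <-> (m < n)%nat.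
Proof. split.
  - intro h. destruct (Nat.le_gt_cases n m) as [h'|h']; auto. pose proof (half_mono _ _ h'). lra.
  - intro h. pose proof (half_mono (S m) n h). pose proof (half_S m). lra. Qed.
Lemma half_small eps : 0 < eps -> exists d, (/2)^d < eps.
Proof. intro he. destruct (pow_lt_1_zero (/2)) with (y := eps) as [N HN]; auto.
  - rewrite Rabs_pos_eq; lra.
  - exists N. specialize (HN N (le_n N)). rewrite Rabs_pos_eq in HN; auto. left; apply half_pos. Qed.

Definition cdz {T} (M : chops T) (z : T) : R :=
  match excluded_middle_informative (exists n, codim_eq M z n) with
  | left H => (/ 2) ^ (proj1_sig (constructive_indefinite_description _ H))
  | right _ => 0
  end.
Lemma cdz_dist {T} (M : chops T) a b : codim_dist M a b = cdz M (sym_diff M a b).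
Proof. reflexivity. Qed.

Section MET.
Context {T : Type} {M : chops T} (HM : is_coHeyting M).

Lemma cd_spec z : (cdz M z = 0 /\ forall d, in_dL M d z) \/
   (exists n, cdz M z = (/2)^n /\ in_dL M n z /\ ~ in_dL M (S n) z).
Proof. unfold cdz. destruct (excluded_middle_informative _) as [h|h].
  - right. destruct (constructive_indefinite_description _ h) as [n [h1 h2]]. simpl. exists n; auto.
  - left. split; auto. intro d. induction d as [|d IH]; [apply in_dL_0|].
    apply NNPP; intro hn. apply h. exists d; split; auto. Qed.

Lemma cd_nonneg z : 0 <= cdz M z.
Proof. destruct (cd_spec z) as [[e _]|[n [e _]]]; rewrite e; [lra| left; apply half_pos]. Qed.

Lemma cd_le z d : cdz M z <= (/2)^d <-> in_dL M d z.
Proof. destruct (cd_spec z) as [[e h]|[n [e [h1 h2]]]]; rewrite e.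
  - split; auto. intros; left; apply half_pos.
  - rewrite half_le. split; intro h.
    + eapply in_dL_mono; eauto.
    + destruct (Nat.le_gt_cases d n) as [h'|h']; auto. exfalso; apply h2. eapply in_dL_mono; [|exact h]. lia. Qed.

Lemma cd_lt z d : cdz M z < (/2)^d <-> in_dL M (S d) z.
Proof. destruct (cd_spec z) as [[e h]|[n [e [h1 h2]]]]; rewrite e.
  - split; auto. intros; apply half_pos.
  - rewrite half_lt. split; intro h.
    + eapply in_dL_mono; eauto.
    + destruct (Nat.le_gt_cases (S d) n) as [h'|h']; auto. exfalso; apply h2. eapply in_dL_mono; [|exact h]. lia. Qed.

Lemma cd_zero z : cdz M z = 0 <-> forall d, in_dL M d z.
Proof. destruct (cd_spec z) as [[e h]|[n [e [h1 h2]]]]; rewrite e.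
  - split; auto.
  - split; intro h.
    + pose proof (half_pos n); lra.
    + exfalso; auto. Qed.

Lemma sym_trans d x y z : in_dL M d (sym_diff M x y) -> in_dL M d (sym_diff M y z) -> in_dL M d (sym_diff M x z).
Proof. apply (eqv_trans HM _ (Idl d) x y z). Qed.

Lemma metric_of : (forall x y, (forall d, in_dL M d (sym_diff M x y)) -> x = y) -> is_metric (codim_dist M).
Proof.
  intro sep. unfold is_metric. split; [|split; [|split; [|split]]].
  - intros; apply cd_nonneg.
  - intro x. apply (proj2 (cd_zero _)). intro d. change (in_dL M d (sd (M:=M) x x)). rewrite sd_self; auto. apply I0, Idl.
  - intros x y. change (cdz M (sym_diff M x y) = cdz M (sym_diff M y x)).
    assert (E : sym_diff M x y = sym_diff M y x) by (unfold sym_diff; apply jC; auto). rewrite E; reflexivity.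
  - intros x y z. change (cdz M (sym_diff M x z) <= cdz M (sym_diff M x y) + cdz M (sym_diff M y z)).
    destruct (cd_spec (sym_diff M x y)) as [[e1 h1]|[n [e1 [h1 h1']]]];
    destruct (cd_spec (sym_diff M y z)) as [[e2 h2]|[m [e2 [h2 h2']]]]; rewrite e1, e2.
    + assert (cdz M (sym_diff M x z) = 0) by (apply (proj2 (cd_zero _)); intro d; apply (sym_trans d x y z); auto). lra.
    + assert (cdz M (sym_diff M x z) <= (/2)^m) by (apply (proj2 (cd_le _ _)); apply (sym_trans m x y z); auto). lra.
    + assert (cdz M (sym_diff M x z) <= (/2)^n) by (apply (proj2 (cd_le _ _)); apply (sym_trans n x y z); auto). lra.
    + assert (Hk : cdz M (sym_diff M x z) <= (/2)^(Nat.min n m)).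
      { apply (proj2 (cd_le _ _)); apply (sym_trans _ x y z); (eapply in_dL_mono; [|eauto]); lia. }
      pose proof (half_pos n). pose proof (half_pos m).
      destruct (Nat.min_spec n m) as [[_ hm]|[_ hm]]; rewrite hm in Hk; lra.
  - intros x y e. apply sep. apply (proj1 (cd_zero _)); exact e.
Qed.

End MET.

Lemma cd_ext {T T'} (M : chops T) (M' : chops T') z z' :
  (forall d, in_dL M d z <-> in_dL M' d z') -> cdz M z = cdz M' z'.
Proof.
  intro E. destruct (cd_spec (M:=M) z) as [[e1 h1]|[n [e1 [h1 h1']]]];
    destruct (cd_spec (M:=M') z') as [[e2 h2]|[m [e2 [h2 h2']]]]; rewrite e1, e2; auto.
  - exfalso. apply h2'. apply E, h1.
  - exfalso. apply h1'. apply E, h2.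
  - f_equal. destruct (Nat.lt_trichotomy n m) as [h|[h|h]]; auto; exfalso.
    + apply h1'. apply (in_dL_mono (S n) m); [lia|]. apply E; exact h2.
    + apply h2'. apply (in_dL_mono (S m) n); [lia|]. apply E; exact h1.
Qed.

Section COMP.
Context {T : Type} (L : chops T) (HL : is_coHeyting L).
Local Notation Hc := (H L HL).
Local Notation io := (iota L HL).
Local Notation HHc := (HH L HL).

Lemma distH_le x y d : codim_dist Hc x y <= (/2)^d <-> proj1_sig x d = proj1_sig y d.
Proof. change (cdz Hc (sym_diff Hc x y) <= (/2)^d <-> proj1_sig x d = proj1_sig y d).
  rewrite cd_le. apply Kd_sym. Qed.

Lemma distL_le a b d : codim_dist L a b <= (/2)^d <-> pi L d a = pi L d b.
Proof. change (cdz L (sym_diff L a b) <= (/2)^d <-> pi L d a = pi L d b).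
  rewrite cd_le. apply KL_sym; auto. Qed.

Lemma metricH : is_metric (codim_dist Hc).
Proof. apply (metric_of HHc). intros x y h. apply hat_ext. intro d. apply (Kd_sym L HL d x y), h. Qed.

Lemma compH : is_complete (codim_dist Hc).
Proof.
  intros u Hu.
  assert (Hd : forall d, exists N, forall m n, (N <= m)%nat -> (N <= n)%nat ->
                 proj1_sig (u m) d = proj1_sig (u n) d).
  { intro d. destruct (Hu ((/2)^d) (half_pos d)) as [N HN]. exists N. intros m n hm hn.
    apply distH_le. left. apply HN; auto. }
  pose (Nf := fun d => proj1_sig (constructive_indefinite_description _ (Hd d))).
  assert (HNf : forall d m n, (Nf d <= m)%nat -> (Nf d <= n)%nat -> proj1_sig (u m) d = proj1_sig (u n) d).
  { intro d. exact (proj2_sig (constructive_indefinite_description _ (Hd d))). }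
  assert (coh : forall d, pi_succ L d (proj1_sig (u (Nf (S d))) (S d)) = proj1_sig (u (Nf d)) d).
  { intro d. rewrite (proj2_sig (u (Nf (S d))) d).
    set (k := Nat.max (Nf d) (Nf (S d))).
    rewrite (HNf d (Nf d) k) by lia.
    assert (e : proj1_sig (u (Nf (S d))) (S d) = proj1_sig (u k) (S d)) by (apply HNf; lia).
    rewrite <- (proj2_sig (u (Nf (S d))) d), <- (proj2_sig (u k) d), e. reflexivity. }
  exists (exist _ (fun d => proj1_sig (u (Nf d)) d) coh).
  intros eps he. destruct (half_small eps he) as [d hd]. exists (Nf d). intros n hn.
  apply Rle_lt_trans with ((/2)^d); auto. apply distH_le. simpl. apply HNf; lia.
Qed.

Lemma isoH a b : codim_dist Hc (io a) (io b) = codim_dist L a b.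
Proof. apply cd_ext. intro d. rewrite Kd_sym, KL_sym by auto. simpl. reflexivity. Qed.

Lemma contH : continuous_m (codim_dist L) (codim_dist Hc) io.
Proof. intros x eps he. exists eps; split; auto. intros y hy. rewrite isoH; auto. Qed.

Lemma denseH : dense_image (codim_dist Hc) io.
Proof. intros z eps he. destruct (half_small eps he) as [d hd]. exists (repr (proj1_sig z d)).
  apply Rle_lt_trans with ((/2)^d); auto. apply distH_le. simpl. symmetry; apply pi_repr. Qed.

Lemma univH : forall (Y : Type) (dY : Y -> Y -> R), is_metric dY -> is_complete dY ->
    forall f : T -> Y, unif_continuous_m (codim_dist L) dY f ->
      exists g : hat L -> Y, continuous_m (codim_dist Hc) dY g /\ (forall x, g (io x) = f x) /\
        forall g' : hat L -> Y, continuous_m (codim_dist Hc) dY g' -> (forall x, g' (io x) = f x) ->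
          forall z, g' z = g z.
Proof.
  intros Y dY [dpos [d0 [dsym [dtri dsep]]]] HcY f Hf.
  assert (lim_unique : forall (s : nat -> Y) l1 l2,
     (forall eps, 0 < eps -> exists N, forall n, (N <= n)%nat -> dY (s n) l1 < eps) ->
     (forall eps, 0 < eps -> exists N, forall n, (N <= n)%nat -> dY (s n) l2 < eps) -> l1 = l2).
  { intros s l1 l2 h1 h2. apply dsep. destruct (Req_dec (dY l1 l2) 0) as [e|ne]; auto. exfalso.
    assert (pos : 0 < dY l1 l2) by (pose proof (dpos l1 l2); lra).
    destruct (h1 (dY l1 l2 / 2)) as [N1 HN1]; [lra|]. destruct (h2 (dY l1 l2 / 2)) as [N2 HN2]; [lra|].
    specialize (HN1 (Nat.max N1 N2) ltac:(lia)). specialize (HN2 (Nat.max N1 N2) ltac:(lia)).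
    pose proof (dtri l1 (s (Nat.max N1 N2)) l2) as tri. rewrite (dsym l1 (s (Nat.max N1 N2))) in tri. lra. }
  pose (sq := fun (z : hat L) (n : nat) => f (@repr T L n (proj1_sig z n))).
  assert (Lrepr : forall (z : hat L) (n m d : nat), (d <= n)%nat -> (d <= m)%nat ->
            codim_dist L (repr (proj1_sig z n)) (repr (proj1_sig z m)) <= (/2)^d).
  { intros z n m d hn hm. apply distL_le. rewrite !hat_coh by auto. reflexivity. }
  assert (cauchy : forall z eps, 0 < eps -> exists N, forall m n, (N <= m)%nat -> (N <= n)%nat ->
            dY (sq z m) (sq z n) < eps).
  { intros z eps he. destruct (Hf eps he) as [del [hdel Hdel]]. destruct (half_small del hdel) as [d hd].
    exists d. intros m n hm hn. apply Hdel. eapply Rle_lt_trans; [apply (Lrepr z m n d)|]; auto. }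
  assert (Hlim : forall z, exists l, forall eps, 0 < eps -> exists N, forall n, (N <= n)%nat -> dY (sq z n) l < eps).
  { intro z. apply HcY. intros eps he. apply cauchy; auto. }
  pose (g := fun z => proj1_sig (constructive_indefinite_description _ (Hlim z))).
  assert (Hg : forall z eps, 0 < eps -> exists N, forall n, (N <= n)%nat -> dY (sq z n) (g z) < eps).
  { intro z. exact (proj2_sig (constructive_indefinite_description _ (Hlim z))). }
  exists g. split; [|split].
  - intros x eps he. destruct (Hf (eps/3)) as [del [hdel Hdel]]; [lra|].
    destruct (half_small del hdel) as [d hd]. exists ((/2)^d); split; [apply half_pos|].
    intros y hy. assert (xy : proj1_sig x d = proj1_sig y d) by (apply distH_le; left; auto).
    destruct (Hg x (eps/3)) as [N1 HN1]; [lra|]. destruct (Hg y (eps/3)) as [N2 HN2]; [lra|].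
    set (n := Nat.max (Nat.max N1 N2) d).
    specialize (HN1 n ltac:(lia)). specialize (HN2 n ltac:(lia)).
    assert (h3 : dY (sq x n) (sq y n) < eps/3).
    { apply Hdel. eapply Rle_lt_trans; [|exact hd]. apply distL_le.
      rewrite !hat_coh by (auto; lia). exact xy. }
    pose proof (dtri (g x) (sq x n) (g y)) as t1. pose proof (dtri (sq x n) (sq y n) (g y)) as t2.
    rewrite (dsym (g x) (sq x n)) in t1. lra.
  - intro a. apply (lim_unique (sq (io a))); [apply Hg|].
    intros eps he. destruct (Hf eps he) as [del [hdel Hdel]]. destruct (half_small del hdel) as [d hd].
    exists d. intros n hn. apply Hdel. eapply Rle_lt_trans; [|exact hd]. apply distL_le.
    apply (hat_coh L HL (io a) n d hn).
  - intros g' hg' hfg' z. apply (lim_unique (sq z)); [|apply Hg].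
    intros eps he. destruct (hg' z eps he) as [del [hdel Hdel]]. destruct (half_small del hdel) as [d hd].
    exists d. intros n hn. unfold sq. rewrite <- hfg', dsym. apply Hdel.
    eapply Rle_lt_trans; [|exact hd]. apply distH_le. simpl. symmetry. apply hat_coh; auto.
Qed.

Lemma topoH (U : hat L -> Prop) : proj_open L U <-> metric_open (codim_dist Hc) U.
Proof. split.
  - intro hU. apply hU.
    + split; [|split].
      * intros x _. exists 1; split; [lra| auto].
      * intros F hF x [V [FV Vx]]. destruct (hF V FV x Vx) as [eps [he h]]. exists eps; split; auto.
        intros y hy; exists V; split; auto.
      * intros U1 V1 h1 h2 x [U1x V1x]. destruct (h1 x U1x) as [e1 [he1 k1]]. destruct (h2 x V1x) as [e2 [he2 k2]].
        exists (Rmin e1 e2); split; [apply Rmin_pos; auto|]. intros y hy. split.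
        -- apply k1. eapply Rlt_le_trans; [exact hy| apply Rmin_l].
        -- apply k2. eapply Rlt_le_trans; [exact hy| apply Rmin_r].
    + intros d V x Vx. exists ((/2)^d); split; [apply half_pos|]. intros y hy.
      assert (e : proj1_sig x d = proj1_sig y d) by (apply distH_le; left; auto). rewrite <- e; auto.
  - intros hU tau [Hwhole [Hunion Hinter]] hcyl.
    set (F := fun V : hat L -> Prop => exists x d, U x /\ (forall y, proj1_sig y d = proj1_sig x d -> U y) /\
                  V = (fun y => proj1_sig y d = proj1_sig x d)).
    assert (eqU : U = (fun x => exists V, F V /\ V x)).
    { apply functional_extensionality; intro x. apply propositional_extensionality. split.
      - intro Ux. destruct (hU x Ux) as [eps [he h]]. destruct (half_small eps he) as [d hd].
        exists (fun y => proj1_sig y d = proj1_sig x d). split; [|reflexivity].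
        exists x, d. split; [auto| split; [|reflexivity]].
        intros y e. apply h. eapply Rle_lt_trans; [|exact hd]. apply distH_le. auto.
      - intros [V [[x0 [d [Ux0 [hx eV]]]] Vx]]. subst V. apply hx; auto. }
    rewrite eqU. apply Hunion. intros V [x [d [_ [_ eV]]]]. subst V.
    exact (hcyl d (fun q => q = proj1_sig x d)).
Qed.

End COMP.

Theorem theorem7p2 (T : Type) (L : chops T) (HL : is_coHeyting L) :
  exists (iota : T -> hat L) (H : chops (hat L)),
    (* iota is a |-> (pi_d(a))_d *)
    (forall a d, proj1_sig (iota a) d = pi L d a) /\
    (* the co-Heyting operations of \hat L are the componentwise ones *)
    (forall d, proj1_sig (ch_zero H) d = pi L d (ch_zero L)) /\
    (forall d, proj1_sig (ch_one H) d = pi L d (ch_one L)) /\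
    (forall x y d, proj1_sig (ch_join H x y) d = qjoin L d (proj1_sig x d) (proj1_sig y d)) /\
    (forall x y d, proj1_sig (ch_meet H x y) d = qmeet L d (proj1_sig x d) (proj1_sig y d)) /\
    (forall x y d, proj1_sig (ch_diff H x y) d = qdiff L d (proj1_sig x d) (proj1_sig y d)) /\
    is_coHeyting H /\
    (* (\hat L, dist_{\hat L}) with iota is the Hausdorff completion of (L, dist_L) *)
    is_hausdorff_completion (codim_dist L) (codim_dist H) iota /\
    (* projective topology = codimetric topology of \hat L *)
    (forall U : hat L -> Prop, proj_open L U <-> metric_open (codim_dist H) U).
Proof.
  exists (iota L HL), (H L HL).
  split; [intros; reflexivity|].
  split; [intros; reflexivity|].
  split; [intros; reflexivity|].
  split; [intros; reflexivity|].
  split; [intros; reflexivity|].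
  split; [intros; reflexivity|].
  split; [apply HH|].
  split; [|apply topoH].
  split; [apply metricH| split; [apply compH| split; [apply contH| split; [apply denseH| apply univH]]]].
Qed.
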